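(* Let $b\in\mathbb{R}$ with $0<|b|<1$ and $p(x,\xi,\tau)=\tau^3-3(x^2+\xi^2)\tau-2bx^3$ for $(x,\xi,\tau)\in\mathbb{R}^3$. Then there do not exist real-valued $C^\infty$ functions $L,A,B$ defined on a neighborhood of $(0,0)$ in $\mathbb{R}^2$ such that $p(x,\xi,\tau)=(\tau-L(x,\xi))(\tau^2+A(x,\xi)\tau+B(x,\xi))$ for all $\tau\in\mathbb{R}$ and all $(x,\xi)$ in that neighborhood; i.e. $p$ admits no $C^\infty$ root near the origin. *)

(* Defs.v *)
From Stdlib Require Import Reals.
Open Scope R_scope.

Definition inSq (r x y : R) : Prop := Rabs x < r /\ Rabs y < r.

Definition cont2On (r : R) (f : R -> R -> R) : Prop :=
  forall x y, inSq r x y ->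
    forall eps, eps > 0 -> exists delta, delta > 0 /\
      forall x' y', Rabs (x' - x) < delta -> Rabs (y' - y) < delta ->
        Rabs (f x' y' - f x y) < eps.

Fixpoint CkOn (r : R) (k : nat) (f : R -> R -> R) : Prop :=
  match k with
  | O => cont2On r f
  | S k' => exists fx fy : R -> R -> R,
      (forall x y, inSq r x y -> derivable_pt_lim (fun t => f t y) x (fx x y)) /\
      (forall x y, inSq r x y -> derivable_pt_lim (fun t => f x t) y (fy x y)) /\
      CkOn r k' fx /\ CkOn r k' fy
  end.

Definition smoothOn (r : R) (f : R -> R -> R) : Prop := forall k, CkOn r k f.

Definition p (b x xi tau : R) : R :=
  tau ^ 3 - 3 * (x ^ 2 + xi ^ 2) * tau - 2 * b * x ^ 3.

(* Main.v *)
Require Import Defs.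
From Stdlib Require Import Reals Lra Psatz.
Open Scope R_scope.
Lemma root_lim (g : R->R) (l k b d : R) : derivable_pt_lim g 0 l -> g 0 = 0 -> 0 < d ->
  (forall t, t<>0 -> Rabs t < d -> g t ^3 - k*t^2*g t - 2*b*t^3 = 0) ->
  l^3 - k*l - 2*b = 0.
Proof.
  intros Hg H0 Hd Ht.
  set (phi := fun u => u^3 - k*u - 2*b).
  change (phi l = 0).
  destruct (Req_dec (phi l) 0) as [E|E]; [exact E|exfalso].
  assert (Hc: continuity_pt phi l) by (unfold phi; reg).
  assert (Hpos: Rabs (phi l) > 0) by (apply Rabs_pos_lt; exact E).
  destruct (Hc _ Hpos) as [d1 [Hd1 Hu]].
  destruct (Hg d1 Hd1) as [[d2 Hd2] Hh]. simpl in Hh.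
  set (h := Rmin d (Rmin d1 d2) / 2).
  assert (Hm1 : Rmin d (Rmin d1 d2) <= d) by apply Rmin_l.
  assert (Hm2 : Rmin d (Rmin d1 d2) <= d2) by (eapply Rle_trans; [apply Rmin_r|apply Rmin_r]).
  assert (Hm3 : 0 < Rmin d (Rmin d1 d2)) by (repeat apply Rmin_pos; lra).
  assert (hpos : 0 < h) by (unfold h; lra).
  assert (hn : h <> 0) by lra.
  assert (ha : Rabs h = h) by (apply Rabs_right; lra).
  set (u := g h / h).
  assert (Hphiu : phi u = 0).
  { assert (E1 := Ht h hn ltac:(rewrite ha; unfold h; lra)).
    assert (gh : g h = u * h) by (unfold u; field; exact hn).
    rewrite gh in E1. unfold phi.
    assert (E2 : h^3 * (u^3 - k*u - 2*b) = 0) by (rewrite <- E1; ring).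
    apply Rmult_integral in E2. destruct E2 as [E2|E2]; [|exact E2].
    exfalso. apply pow_nonzero in E2; auto. }
  assert (Hul : Rabs (u - l) < d1).
  { assert (H3 := Hh h hn ltac:(rewrite ha; unfold h; lra)).
    rewrite Rplus_0_l, H0, Rminus_0_r in H3. exact H3. }
  destruct (Req_dec u l) as [Eul|Eul].
  - apply E. rewrite <- Eul. exact Hphiu.
  - assert (H4 := Hu u (conj (conj I (not_eq_sym Eul)) Hul)).
    simpl in H4. unfold R_dist in H4. rewrite Hphiu, Rminus_0_l, Rabs_Ropp in H4. lra.
Qed.
Lemma diag (r : R) (L fx fy : R->R->R) (c : R) : 0<r -> Rabs c <= 1 ->
 (forall x y, inSq r x y -> derivable_pt_lim (fun t => L t y) x (fx x y)) ->
 (forall x y, inSq r x y -> derivable_pt_lim (fun t => L x t) y (fy x y)) ->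
 cont2On r fx ->
 derivable_pt_lim (fun t => L t (c*t)) 0 (fx 0 0 + c * fy 0 0).
Proof.
  intros Hr Hc Hfx Hfy Hcont eps Heps.
  assert (I0 : inSq r 0 0) by (unfold inSq; rewrite Rabs_R0; lra).
  destruct (Hfy 0 0 I0 (eps/2) ltac:(lra)) as [[d1 Hd1] H1]. simpl in H1.
  destruct (Hcont 0 0 I0 (eps/2) ltac:(lra)) as [d2 [Hd2 H2]].
  assert (Hm : 0 < Rmin r (Rmin d1 d2)) by (repeat apply Rmin_pos; lra).
  exists (mkposreal _ Hm). simpl. intros h hn hlt.
  assert (hr : Rabs h < r) by (eapply Rlt_le_trans; [exact hlt| apply Rmin_l]).
  assert (hd1 : Rabs h < d1) by (eapply Rlt_le_trans; [exact hlt| eapply Rle_trans; [apply Rmin_r|apply Rmin_l]]).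
  assert (hd2 : Rabs h < d2) by (eapply Rlt_le_trans; [exact hlt| eapply Rle_trans; [apply Rmin_r|apply Rmin_r]]).
  assert (Hch : Rabs (c*h) <= Rabs h).
  { rewrite Rabs_mult. assert (0 <= Rabs h) by apply Rabs_pos. nra. }
  assert (habs : 0 < Rabs h) by (apply Rabs_pos_lt; exact hn).
  assert (HA : exists th, Rabs th < Rabs h /\ L h (c*h) - L 0 (c*h) = fx th (c*h) * h).
  { destruct (Rlt_or_le 0 h) as [hp|hm].
    - destruct (MVT_cor2 (fun s => L s (c*h)) (fun s => fx s (c*h)) 0 h hp) as [th [E Hth]].
      { intros s Hs. apply Hfx. unfold inSq. split; [|lra].
        rewrite Rabs_right by lra. rewrite Rabs_right in hr by lra. lra. }
      exists th. split.
      + rewrite Rabs_right by lra. rewrite Rabs_right by lra. lra.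
      + rewrite E. ring.
    - assert (hm' : h < 0) by lra.
      destruct (MVT_cor2 (fun s => L s (c*h)) (fun s => fx s (c*h)) h 0 hm') as [th [E Hth]].
      { intros s Hs. apply Hfx. unfold inSq. split; [|lra].
        rewrite Rabs_left1 by lra. rewrite Rabs_left1 in hr by lra. lra. }
      exists th. split.
      + rewrite Rabs_left by lra. rewrite Rabs_left by lra. lra.
      + simpl in E. replace (L h (c*h) - L 0 (c*h)) with (-(L 0 (c*h) - L h (c*h))) by ring.
        rewrite E. ring. }
  destruct HA as [th [Hth EA]].
  assert (HB : Rabs (L 0 (c*h) - L 0 0 - c*h*fy 0 0) <= eps/2 * Rabs h).
  { destruct (Req_dec c 0) as [c0|c0].
    - subst c. replace (0*h) with 0 by ring.
      replace (L 0 0 - L 0 0 - 0 * fy 0 0) with 0 by ring. rewrite Rabs_R0.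
      assert (0 <= Rabs h) by apply Rabs_pos. nra.
    - assert (chn : c*h <> 0) by (apply Rmult_integral_contrapositive; tauto).
      assert (H1' := H1 (c*h) chn ltac:(lra)). rewrite Rplus_0_l in H1'.
      replace (L 0 (c*h) - L 0 0 - c*h*fy 0 0) with ((c*h) * ((L 0 (c*h) - L 0 0)/(c*h) - fy 0 0)) by (field; split; assumption).
      rewrite Rabs_mult. assert (0 <= Rabs ((L 0 (c*h) - L 0 0)/(c*h) - fy 0 0)) by apply Rabs_pos.
      assert (0 <= Rabs (c*h)) by apply Rabs_pos. nra. }
  assert (HC : Rabs (fx th (c*h) - fx 0 0) < eps/2).
  { apply H2; rewrite Rminus_0_r; lra. }
  rewrite Rplus_0_l.
  replace ((L h (c*h) - L 0 (c*0)) / h - (fx 0 0 + c * fy 0 0))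
    with ((fx th (c*h) - fx 0 0) + (L 0 (c*h) - L 0 0 - c*h*fy 0 0)/h).
  2:{ replace (c*0) with 0 by ring.
      replace (L h (c*h)) with (L 0 (c*h) + fx th (c*h) * h) by lra. field. exact hn. }
  eapply Rle_lt_trans; [apply Rabs_triang|].
  unfold Rdiv at 1. rewrite Rabs_mult, Rabs_Rinv by exact hn.
  assert (Rabs (L 0 (c*h) - L 0 0 - c*h*fy 0 0) * / Rabs h <= eps/2).
  { apply (Rmult_le_reg_r (Rabs h)); [exact habs|].
    rewrite Rmult_assoc, Rinv_l by lra. lra. }
  lra.
Qed.

Lemma alg (a be b : R) : b <> 0 ->
  (a+0*be)^3 - 3*(1+0^2)*(a+0*be) - 2*b = 0 ->
  (a+1*be)^3 - 3*(1+1^2)*(a+1*be) - 2*b = 0 ->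
  (a+(-1)*be)^3 - 3*(1+(-1)^2)*(a+(-1)*be) - 2*b = 0 ->
  be^3 - 3*be - 2*0 = 0 -> False.
Proof.
  intros Hb E0 Ep Em Ey.
  assert (F1 : a*be^2 = a) by nra.
  assert (F2 : be*(a^2-1) = 0) by nra.
  apply Rmult_integral in F2. destruct F2 as [F2|F2].
  - subst be. assert (a = 0) by nra. subst a. apply Hb. nra.
  - assert (a <> 0) by (intro; subst; nra).
    assert (Hbe : be^2 = 1).
    { apply (Rmult_eq_reg_l a); [|assumption]. nra. }
    assert (E : be*(be^2-3) = 0) by nra. rewrite Hbe in E.
    assert (be = 0) by lra. subst be. simpl in Hbe. lra.
Qed.

Theorem mainTheorem10 (b : R) (hb0 : 0 < Rabs b) (hb1 : Rabs b < 1) :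
  ~ exists (r : R) (L A B : R -> R -> R),
      0 < r /\ smoothOn r L /\ smoothOn r A /\ smoothOn r B /\
      forall x xi tau, inSq r x xi ->
        p b x xi tau = (tau - L x xi) * (tau ^ 2 + A x xi * tau + B x xi).
Proof.
  intros [r [L [A [B [Hr [HL [_ [_ Hp]]]]]]]].
  assert (Hb : b <> 0) by (intro; subst; rewrite Rabs_R0 in hb0; lra).
  assert (Hroot : forall x xi, inSq r x xi -> p b x xi (L x xi) = 0).
  { intros x xi H. rewrite Hp by exact H. ring. }
  assert (I0 : inSq r 0 0) by (unfold inSq; rewrite Rabs_R0; lra).
  assert (L00 : L 0 0 = 0).
  { assert (H := Hroot 0 0 I0). unfold p in H.
    assert (L 0 0 ^ 3 = 0) by (etransitivity; [|exact H]; ring).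
    destruct (Req_dec (L 0 0) 0); [assumption|].
    exfalso. apply (pow_nonzero (L 0 0) 3); assumption. }
  destruct (HL 1%nat) as [fx [fy [Hfx [Hfy [Hcx _]]]]].
  simpl in Hcx.
  assert (Hd : forall c, Rabs c <= 1 ->
     (fx 0 0 + c*fy 0 0)^3 - 3*(1+c^2)*(fx 0 0 + c*fy 0 0) - 2*b = 0).
  { intros c Hc. apply (root_lim (fun t => L t (c*t)) _ _ _ r).
    - apply diag with r; assumption.
    - simpl. replace (c*0) with 0 by ring. exact L00.
    - exact Hr.
    - intros t tn tr. simpl.
      assert (inSq r t (c*t)).
      { split; [assumption|]. rewrite Rabs_mult.
        assert (0 <= Rabs t) by apply Rabs_pos. nra. }
      assert (H0 := Hroot _ _ H). unfold p in H0. etransitivity; [|exact H0]; ring. }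
  apply (alg (fx 0 0) (fy 0 0) b Hb).
  - apply (Hd 0). rewrite Rabs_R0; lra.
  - apply (Hd 1). rewrite Rabs_R1; lra.
  - apply (Hd (-1)). rewrite Rabs_left; lra.
  - apply (root_lim (fun t => L 0 t) _ _ _ r).
    + apply Hfy; exact I0.
    + exact L00.
    + exact Hr.
    + intros t tn tr. simpl.
      assert (inSq r 0 t) by (split; [rewrite Rabs_R0|]; assumption).
      assert (H0 := Hroot _ _ H). unfold p in H0. etransitivity; [|exact H0]; ring.
Qed.
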